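(* Let $\mathscr{X}$ be a complex Banach space, $\mathcal{A}\subseteq\mathcal{B}(\mathscr{X})$ a reflexive algebra, and $S\in\mathcal{B}(\mathscr{X})$ invertible. The following are equivalent: (a) $S\in\mathrm{Col}(\mathcal{A})$; (b) $S\mathcal{A}_x\in\mathrm{Lat}(\mathcal{A})$ and $S^{-1}\mathcal{A}_x\in\mathrm{Lat}(\mathcal{A})$ for all $x\in\mathscr{X}$; (c) $S\mathcal{A}S^{-1}=\mathcal{A}$; (d) $\mathrm{Lat}(S\mathcal{A}S^{-1})=\mathrm{Lat}(\mathcal{A})$; (e) $S\mathcal{A}_x=\mathcal{A}_{Sx}$ for all $x\in\mathscr{X}$.
   Context: $\mathrm{Lat}(\mathcal{T})$ is the set of closed subspaces invariant under all operators in $\mathcal{T}\subseteq\mathcal{B}(\mathscr{X})$; $\mathrm{Alg}(\mathfrak{F})=\{T\in\mathcal{B}(\mathscr{X}):T\mathscr{M}\subseteq\mathscr{M}\ \forall\mathscr{M}\in\mathfrak{F}\}$. A reflexive algebra is a subalgebra $\mathcal{A}\subseteq\mathcal{B}(\mathscr{X})$ with $\mathrm{Alg}\,\mathrm{Lat}(\mathcal{A})=\mathcal{A}$. For $x\in\mathscr{X}$, $\mathcal{A}_x=\overline{\{Ax:A\in\mathcal{A}\}}$. An invertible $S$ is a collineation of a family $\mathfrak{F}$ of closed subspaces if for all closed subspaces $\mathscr{M}$: $\mathscr{M}\in\mathfrak{F}$ iff $S\mathscr{M}\in\mathfrak{F}$; $\mathrm{Col}(\mathcal{A}):=\mathrm{Col}(\mathrm{Lat}(\mathcal{A}))$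 is the group of collineations of $\mathrm{Lat}(\mathcal{A})$. *)

(* Defs.v *)
From HB Require Import structures.
From mathcomp Require Import all_boot all_order all_algebra.
From mathcomp Require Import all_classical all_reals all_analysis.
From mathcomp Require Import complex.
Set Implicit Arguments. Unset Strict Implicit. Unset Printing Implicit Defensive.
Import Order.TTheory GRing.Theory Num.Theory.
Import numFieldNormedType.Exports.
Local Open Scope classical_set_scope.
Local Open Scope ring_scope.

Section Ops.
Variables (R : realType) (X : completeNormedModType (R[i])).

(* bounded (= continuous) linear operators on X *)
Definition bop (T : X -> X) : Prop := linear T /\ continuous T.

Definition closed_subspace (M : set X) : Prop :=
  closed M /\ M 0 /\ (forall (a : R[i]) u v, M u -> M v -> M (a *: u + v)).

Definition subalgebra (A : set (X -> X)) : Prop :=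
  A `<=` bop /\ A (fun _ => 0) /\
  (forall (a : R[i]) T U, A T -> A U -> A (fun x => a *: T x + U x)) /\
  (forall T U, A T -> A U -> A (T \o U)).

Definition Lat (T : set (X -> X)) : set (set X) :=
  [set M | closed_subspace M /\ forall A, T A -> A @` M `<=` M].

Definition Alg (F : set (set X)) : set (X -> X) :=
  [set T | bop T /\ forall M, F M -> T @` M `<=` M].

Definition reflexive_algebra (A : set (X -> X)) : Prop :=
  subalgebra A /\ Alg (Lat A) = A.

Definition orbit_sp (A : set (X -> X)) (x : X) : set X :=
  closure [set T x | T in A].

Definition bop_inverse (S Sinv : X -> X) : Prop :=
  bop S /\ bop Sinv /\ S \o Sinv = id /\ Sinv \o S = id.

Definition collineation (F : set (set X)) (S : X -> X) : Prop :=
  forall M, closed_subspace M -> (F M <-> F (S @` M)).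

Definition Col (A : set (X -> X)) : set (X -> X) :=
  [set S | (exists Sinv, bop_inverse S Sinv) /\ collineation (Lat A) S].

Definition conj_alg (S Sinv : X -> X) (A : set (X -> X)) : set (X -> X) :=
  [set S \o T \o Sinv | T in A].
End Ops.

(* Main.v *)
Require Import Defs.
From HB Require Import structures.
From mathcomp Require Import all_boot all_order all_algebra.
From mathcomp Require Import all_classical all_reals all_analysis.
From mathcomp Require Import complex.
Import Order.TTheory GRing.Theory Num.Theory.
Import numFieldNormedType.Exports.
Local Open Scope classical_set_scope.
Local Open Scope ring_scope.
Section T.
Variables (R : realType) (X : completeNormedModType (R[i])).

Lemma cont_affl (a : R[i]) (v : X) : continuous (fun u : X => a *: u + v).
Proof. move=> u. apply: cvgD. apply: cvgZr. exact: cvg_id. exact: cvg_cst. Qed.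
Lemma cont_affr (a : R[i]) (v : X) : continuous (fun u : X => a *: v + u).
Proof. move=> u. apply: cvgD. exact: cvg_cst. exact: cvg_id. Qed.

Lemma closure_map (f : X -> X) (E F : set X) : continuous f -> closed F ->
  f @` E `<=` F -> f @` closure E `<=` F.
Proof.
move=> cf cF sEF _ [u cu <-].
have : closure E `<=` f @^-1` F.
  have -> : f @^-1` F = closure (f @^-1` F).
    by apply/closure_id; move: cf => /continuous_closedP; apply.
  apply: closureS => y Ey; apply: sEF; by exists y.
by apply.
Qed.

Lemma closure_sub (E F : set X) : closed F -> E `<=` F -> closure E `<=` F.
Proof. move=> cF sEF; rewrite (closure_id F).1 //; exact: closureS. Qed.

Lemma cs_closure (E : set X) : E 0 ->
  (forall (a : R[i]) u v, E u -> E v -> E (a *: u + v)) ->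
  closed_subspace (closure E).
Proof.
move=> E0 El; split; first exact: closed_closure.
split; first exact: subset_closure.
move=> a u v cu cv.
have h1 : forall w, E w -> closure E (a *: u + w).
  move=> w Ew; apply: (@closure_map _ E _ (@cont_affl a w) (@closed_closure _ E)).
    by move=> _ [y Ey <-]; apply: subset_closure; apply: El.
  by exists u.
apply: (@closure_map _ E _ (@cont_affr a u) (@closed_closure _ E)).
  by move=> _ [y Ey <-]; apply: h1.
by exists v.
Qed.

Lemma bop_comp (f g : X -> X) : bop f -> bop g -> bop (f \o g).
Proof.
move=> [lf cf] [lg cg]; split.
  by move=> a u v /=; rewrite lg lf.
move=> x; apply: continuous_comp; [exact: cg | exact: cf].
Qed.

Lemma bop_id : bop (@id X).
Proof. split; first by []. by move=> x; exact: cvg_id. Qed.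

Lemma bopinv_sym (S Sinv : X -> X) : bop_inverse S Sinv -> bop_inverse Sinv S.
Proof. by move=> [? [? [? ?]]]. Qed.

Lemma img_preimg (S Sinv : X -> X) (M : set X) : bop_inverse S Sinv ->
  S @` M = Sinv @^-1` M.
Proof.
move=> [_ [_ [e1 e2]]]; apply/seteqP; split.
  move=> _ [m Mm <-] /=. have := congr1 (fun f => f m) e2. by move=> /= ->.
move=> y /= My; exists (Sinv y) => //. have := congr1 (fun f => f y) e1. by [].
Qed.

Lemma img_img (S Sinv : X -> X) (M : set X) : bop_inverse S Sinv ->
  Sinv @` (S @` M) = M.
Proof.
move=> H; rewrite (img_preimg _ _ M H) (img_preimg _ _ _ (bopinv_sym _ _ H)).
case: H => _ [_ [e1 e2]]; apply/seteqP; split => y /=.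
- by have := congr1 (fun f => f y) e2 => /= ->.
- by have := congr1 (fun f => f y) e2 => /= ->.
Qed.

Lemma lin0 (f : X -> X) : linear f -> f 0 = 0.
Proof.
move=> lf; have h := lf 1 0 0; rewrite !scale1r addr0 in h.
by apply: (@addrI _ (f 0)); rewrite addr0 -h.
Qed.

Lemma cs_img (S Sinv : X -> X) (M : set X) : bop_inverse S Sinv ->
  closed_subspace M -> closed_subspace (S @` M).
Proof.
move=> H [cM [M0 Ml]]; rewrite (img_preimg _ _ M H).
case: H => [[lS cS] [[lI cI] _]]; split.
  by move: cI => /continuous_closedP; apply.
split => /=; first by rewrite lin0.
by move=> a u v Mu Mv /=; rewrite lI; apply: Ml.
Qed.

Variable (A : set (X -> X)).
Hypothesis rA : reflexive_algebra A.

Lemma id_in : A id.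
Proof.
case: rA => _ <-; split; first exact: bop_id.
by move=> M _ _ [m Mm <-].
Qed.

Lemma orbit_lat x : Lat A (orbit_sp A x).
Proof.
case: rA => [[sb [A0 [Al Am]]] _].
split.
  apply: cs_closure; first by exists (fun _ => 0).
  move=> a _ _ [T AT <-] [U AU <-].
  by exists (fun x => a *: T x + U x) => //; apply: Al.
move=> T AT; apply: closure_map.
- by case: (sb _ AT).
- exact: closed_closure.
- move=> _ [_ [U AU <-] <-]; apply: subset_closure.
  by exists (T \o U) => //; apply: Am.
Qed.

Lemma orbit_self x : orbit_sp A x x.
Proof. apply: subset_closure; exists id => //; exact: id_in. Qed.

Lemma orbit_min (M : set X) x : Lat A M -> M x -> orbit_sp A x `<=` M.
Proof.
move=> [[cM _] inv] Mx; apply: closure_sub => // _ [T AT <-].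
by apply: (inv T AT); exists x.
Qed.

Lemma lat_conj (S Sinv : X -> X) (N : set X) : bop_inverse S Sinv ->
  closed_subspace N -> Lat (conj_alg S Sinv A) N <-> Lat A (Sinv @` N).
Proof.
move=> H cN; have [_ [_ [e1 e2]]] := H.
have E1 y : S (Sinv y) = y by have := congr1 (fun f => f y) e1.
have E2 y : Sinv (S y) = y by have := congr1 (fun f => f y) e2.
split.
  move=> [_ inv]; split; first exact: (cs_img _ _ _ (bopinv_sym _ _ H)).
  move=> T AT _ [_ [n Nn <-] <-].
  exists (S (T (Sinv n))); last by rewrite E2.
  by apply: (inv (S \o T \o Sinv)); [exists T | exists n].
move=> [_ inv]; split => //.
move=> _ [T AT <-] _ [n Nn <-] /=.
have : (Sinv @` N) (T (Sinv n)) by apply: (inv T AT); exists (Sinv n) => //; exists n.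
by move=> [m Nm <-]; rewrite E1.
Qed.

Lemma lat_img (U V : X -> X) (N : set X) : bop_inverse U V ->
  (forall x, Lat A (U @` orbit_sp A x)) -> Lat A N -> Lat A (U @` N).
Proof.
move=> H hx LN; split; first by apply: (cs_img _ _ _ H); case: LN.
move=> T AT _ [_ [n Nn <-] <-].
have h : (U @` orbit_sp A n) (T (U n)).
  by apply: ((hx n).2 T AT); exists (U n) => //; exists n => //; exact: orbit_self.
case: h => m Om <-; exists m => //; exact: (orbit_min _ _ LN Nn).
Qed.

Lemma main_sec (S Sinv : X -> X) : bop_inverse S Sinv ->
  let a := Col A S in
  let b := forall x, Lat A (S @` orbit_sp A x) /\ Lat A (Sinv @` orbit_sp A x) in
  let c := conj_alg S Sinv A = A in
  let d := Lat (conj_alg S Sinv A) = Lat A in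
  let e := forall x, S @` orbit_sp A x = orbit_sp A (S x) in
  (a <-> b) /\ (a <-> c) /\ (a <-> d) /\ (a <-> e).
Proof.
move=> H a b c d e.
have H' := bopinv_sym _ _ H.
have [bS [bI [e1 e2]]] := H.
have E1 y : S (Sinv y) = y by have := congr1 (fun f => f y) e1.
have E2 y : Sinv (S y) = y by have := congr1 (fun f => f y) e2.
have OL := orbit_lat.
have ab : a <-> b.
  split.
  - move=> [_ col] x; split.
    + exact: ((col _ (OL x).1).1 (OL x)).
    + apply: (col _ (cs_img _ _ _ H' (OL x).1)).2.
      by rewrite (img_img _ _ _ H').
  - move=> hb; split; first by exists Sinv.
    move=> M cM; split.
    + exact: (lat_img _ _ _ H (fun x => (hb x).1)).
    + move=> LSM; rewrite -(img_img _ _ M H).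
      exact: (lat_img _ _ _ H' (fun x => (hb x).2) LSM).
have ad : a <-> d.
  split.
  - move=> [_ col]; rewrite /d; apply/funext => N; apply/propext; split.
    + move=> LN; have cN := LN.1.
      have := (lat_conj _ _ _ H cN).1 LN.
      by move/(col _ (cs_img _ _ _ H' cN)).1; rewrite (img_img _ _ _ H').
    + move=> LN; have cN := LN.1.
      apply: (lat_conj _ _ _ H cN).2; apply: (col _ (cs_img _ _ _ H' cN)).2.
      by rewrite (img_img _ _ _ H').
  - move=> hd; split; first by exists Sinv.
    move=> M cM; rewrite -{2}hd; split.
    + move=> LM; apply: (lat_conj _ _ _ H (cs_img _ _ _ H cM)).2.
      by rewrite (img_img _ _ _ H).
    + by move/(lat_conj _ _ _ H (cs_img _ _ _ H cM)).1; rewrite (img_img _ _ _ H).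
have cd : c <-> d.
  split; first by rewrite /c /d => ->.
  move=> hd; have [_ col] := ad.2 hd.
  have [[sb _] rAe] := rA.
  apply/seteqP; split.
  - move=> _ [T AT <-]; rewrite -rAe; split.
      by apply: bop_comp; [apply: bop_comp => //; exact: sb | ].
    by move=> M; rewrite -hd => LM; apply: LM.2; exists T.
  - move=> T AT; exists (Sinv \o T \o S).
      rewrite -rAe; split.
        by apply: bop_comp; [apply: bop_comp => //; exact: sb | ].
      move=> M LM _ [m Mm <-] /=.
      have LSM := (col _ LM.1).1 LM.
      have : (S @` M) (T (S m)) by apply: (LSM.2 T AT); exists (S m) => //; exists m.
      by move=> [m' Mm' <-]; rewrite E2.
    by apply/funext => y; rewrite /comp !E1.
have be : b <-> e.
  split.
  - move=> hb x; apply/seteqP; split.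
    + move=> _ [z Oz <-].
      have := orbit_min _ _ (hb (S x)).2 (ex_intro2 _ _ (S x) (orbit_self (S x)) (E2 x)) _ Oz.
      by move=> [w Ow <-]; rewrite E1.
    + apply: (orbit_min _ _ (hb x).1); exists x => //; exact: orbit_self.
  - move=> he x; split; first by rewrite he.
    have -> : orbit_sp A x = S @` orbit_sp A (Sinv x) by rewrite he E1.
    by rewrite (img_img _ _ _ H).
split; first exact: ab.
split; first exact: (iff_trans ad (iff_sym cd)).
split; first exact: ad.
exact: (iff_trans ab be).
Qed.

End T.

Theorem theorem3p9 (R : realType) (X : completeNormedModType (R[i]))
    (A : set (X -> X)) (S Sinv : X -> X) :
  reflexive_algebra A -> bop_inverse S Sinv ->
  let a := Col A S in
  let b := forall x, Lat A (S @` orbit_sp A x) /\ Lat A (Sinv @` orbit_sp A x) in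
  let c := conj_alg S Sinv A = A in
  let d := Lat (conj_alg S Sinv A) = Lat A in
  let e := forall x, S @` orbit_sp A x = orbit_sp A (S x) in
  (a <-> b) /\ (a <-> c) /\ (a <-> d) /\ (a <-> e).
Proof. move=> rA H; exact: (@main_sec R X A rA S Sinv H). Qed.
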